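(* Let $Q$ be a flat $\mathrm{SYNCSIMPLE}$-process that is must-convergent. Then the process $!0\mid ?0\mid Q$ is also must-convergent.
   Context: $\mathrm{SYNCSIMPLE}$: subprocesses are $\mathcal{U} ::= \checkmark \mid 0 \mid\, !\mathcal{U} \mid\, ?\mathcal{U}$; a process is a finite parallel composition $\mathcal{U}_1\mid\cdots\mid\mathcal{U}_n$, where $\mid$ is associative and commutative and $0$ is a unit. The only reduction step is $!\mathcal{U}_1\mid ?\mathcal{U}_2\mid \mathcal{P}\to \mathcal{U}_1\mid\mathcal{U}_2\mid\mathcal{P}$. A process is successful if it has the form $\checkmark\mid\mathcal{P}$; may-convergent if it reduces in zero or more steps to a successful process; must-convergent if every process reachable from it in zero or more steps is may-convergent. A process is flat if it has the form $A_1\mid\cdots\mid A_n$ where each $A_i$ is one of $!0$, $?0$, $!\checkmark$, $?\checkmark$. *)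

(* Defs.v *)
From Stdlib Require Import List Permutation Relations.
Import ListNotations.

Inductive subproc : Type :=
| Tick : subproc
| Zero : subproc
| Snd : subproc -> subproc
| Rcv : subproc -> subproc.

(* A process U1 | ... | Un is a list of subprocesses; associativity and
   commutativity of | are accounted for by working up to Permutation,
   and 0 being a unit is harmless since Zero components never react and
   are never "checkmark". *)
Definition process := list subproc.

Definition step (P P' : process) : Prop :=
  exists U1 U2 R, Permutation P (Snd U1 :: Rcv U2 :: R) /\ P' = U1 :: U2 :: R.

Definition steps : process -> process -> Prop := clos_refl_trans process step.

Definition successful (P : process) : Prop := In Tick P.

Definition may_convergent (P : process) : Prop :=
  exists P', steps P P' /\ successful P'.

Definition must_convergent (P : process) : Prop :=
  forall P', steps P P' -> may_convergent P'.

(* flat: each component is !0, ?0, !tick, ?tick (Zero components allowed,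
   as 0 is the unit of |). *)
Definition flat_atom (U : subproc) : Prop :=
  U = Snd Zero \/ U = Rcv Zero \/ U = Snd Tick \/ U = Rcv Tick \/ U = Zero.

Definition flat (P : process) : Prop := Forall flat_atom P.

(* Main.v *)
Require Import Defs.
From Stdlib Require Import List Permutation Relations Lia.
Import ListNotations.

Definition sdec : forall x y : subproc, {x = y} + {x <> y}.
Proof. decide equality. Defined.

Definition cnt (P : process) (u : subproc) := count_occ sdec P u.

Definition flatish (P : process) := Forall (fun u => flat_atom u \/ u = Tick) P.

Lemma perm_cnt P P' u : Permutation P P' -> cnt P u = cnt P' u.
Proof. intro H. apply (Permutation_count_occ sdec) with (x := u) in H. exact H. Qed.

Lemma in_perm (a : subproc) P : In a P -> exists R, Permutation P (a :: R).
Proof.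
  intro H. destruct (in_split _ _ H) as [l1 [l2 ->]].
  exists (l1 ++ l2). symmetry. apply Permutation_middle.
Qed.

Lemma cnt_In P u : In u P <-> cnt P u > 0.
Proof. apply count_occ_In. Qed.

Lemma step_flatish X X' : step X X' -> flatish X ->
  flatish X' /\ exists U1 U2 R, Permutation X (Snd U1 :: Rcv U2 :: R) /\
    X' = U1 :: U2 :: R /\ (U1 = Zero \/ U1 = Tick) /\ (U2 = Zero \/ U2 = Tick).
Proof.
  intros [U1 [U2 [R [Hp ->]]]] Hf.
  unfold flatish in *.
  assert (Hf' : Forall (fun u => flat_atom u \/ u = Tick) (Snd U1 :: Rcv U2 :: R))
    by (eapply Permutation_Forall; eauto).
  inversion Hf' as [|? ? H1 Hf2]; subst. inversion Hf2 as [|? ? H2 HR]; subst.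
  unfold flat_atom in H1, H2.
  assert (A1 : U1 = Zero \/ U1 = Tick) by
    (destruct H1 as [[E|[E|[E|[E|E]]]]|E]; inversion E; auto).
  assert (A2 : U2 = Zero \/ U2 = Tick) by
    (destruct H2 as [[E|[E|[E|[E|E]]]]|E]; inversion E; auto).
  split.
  - constructor; [|constructor]; auto;
    [destruct A1 as [->| ->]|destruct A2 as [->| ->]]; unfold flat_atom; tauto.
  - exists U1, U2, R. auto.
Qed.

Lemma steps_flatish X X' : steps X X' -> flatish X -> flatish X'.
Proof.
  induction 1; auto. intro Hf. apply (step_flatish _ _ H Hf).
Qed.

Definition good (P : process) :=
  In Tick P \/ (In (Snd Tick) P /\ (In (Rcv Zero) P \/ In (Rcv Tick) P)) \/
  (In (Rcv Tick) P /\ (In (Snd Zero) P \/ In (Snd Tick) P)).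

Lemma step_to_tick P U : In (Snd Tick) P -> In (Rcv U) P -> may_convergent P.
Proof.
  intros H1 H2. destruct (in_perm _ _ H1) as [R HR].
  assert (In (Rcv U) R).
  { apply (Permutation_in _ HR) in H2. destruct H2 as [E|E]; [discriminate|exact E]. }
  destruct (in_perm _ _ H) as [R' HR'].
  exists (Tick :: U :: R'). split.
  - apply rt_step. exists Tick, U, R'. split; auto.
    eapply perm_trans; [exact HR|]. constructor. exact HR'.
  - left; reflexivity.
Qed.

Lemma step_to_tick2 P U : In (Rcv Tick) P -> In (Snd U) P -> may_convergent P.
Proof.
  intros H1 H2. destruct (in_perm _ _ H2) as [R HR].
  assert (In (Rcv Tick) R).
  { apply (Permutation_in _ HR) in H1. destruct H1 as [E|E]; [discriminate|exact E]. }
  destruct (in_perm _ _ H) as [R' HR'].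
  exists (U :: Tick :: R'). split.
  - apply rt_step. exists U, Tick, R'. split; auto.
    eapply perm_trans; [exact HR|]. constructor. exact HR'.
  - right; left; reflexivity.
Qed.

Lemma good_may P : good P -> may_convergent P.
Proof.
  intros [H|[[H1 [H2|H2]]|[H1 [H2|H2]]]].
  - exists P. split; [apply rt_refl|exact H].
  - eapply step_to_tick; eauto.
  - eapply step_to_tick; eauto.
  - eapply step_to_tick2; eauto.
  - eapply step_to_tick2; eauto.
Qed.

Lemma may_good_aux X Z : steps X Z -> flatish X -> good Z -> good X.
Proof.
  induction 1; intros Hf Hg; auto.
  - destruct (step_flatish _ _ H Hf) as [_ [U1 [U2 [R [Hp [-> [A1 A2]]]]]]].
    assert (I1 : In (Snd U1) x) by (eapply Permutation_in; [symmetry; exact Hp|left; auto]).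
    assert (I2 : In (Rcv U2) x) by (eapply Permutation_in; [symmetry; exact Hp|right; left; auto]).
    assert (IR : forall a, In a R -> In a x)
      by (intros a Ha; eapply Permutation_in; [symmetry; exact Hp|right; right; auto]).
    destruct A1 as [-> | ->]; [destruct A2 as [-> | ->]|].
    + assert (G : forall a, In a (Zero :: Zero :: R) -> a <> Zero -> In a x).
      { intros a [E|[E|E]] N; try congruence. auto. }
      unfold good in *.
      destruct Hg as [H0|[[H0 [H3|H3]]|[H0 [H3|H3]]]].
      * left. apply G; auto; discriminate.
      * right; left. split; [apply G; auto; discriminate|left; apply G; auto; discriminate].
      * right; left. split; [apply G; auto; discriminate|right; apply G; auto; discriminate].
      * right; right. split; [apply G; auto; discriminate|left; apply G; auto; discriminate].
      * right; right. split; [apply G; auto; discriminate|right; apply G; auto; discriminate].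
    + right; right. split; [auto|left; auto].
    + right; left. split; [auto|destruct A2 as [-> | ->]; [left|right]; auto].
  - apply IHclos_refl_trans1; auto. apply IHclos_refl_trans2; auto.
    eapply steps_flatish; eauto.
Qed.

Lemma may_good P : flatish P -> may_convergent P -> good P.
Proof. intros Hf [Z [HZ Hg]]. eapply may_good_aux; eauto. left; exact Hg. Qed.

Definition Inv (Q X : process) :=
  flatish X /\ (In Tick X \/ exists Y e, steps Q Y /\
    cnt X (Snd Tick) = cnt Y (Snd Tick) /\ cnt X (Rcv Tick) = cnt Y (Rcv Tick) /\
    cnt X Tick = cnt Y Tick /\ cnt X (Snd Zero) = cnt Y (Snd Zero) + e /\
    cnt X (Rcv Zero) = cnt Y (Rcv Zero) + e).

Lemma Inv_step Q X X' : flatish Q -> step X X' -> Inv Q X -> Inv Q X'.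
Proof.
  intros HQ Hs [Hf Hi].
  destruct (step_flatish _ _ Hs Hf) as [Hf' [U1 [U2 [R [Hp [-> [A1 A2]]]]]]].
  split; auto.
  destruct A1 as [-> | ->]; [|left; left; auto].
  destruct A2 as [-> | ->]; [|left; right; left; auto].
  destruct Hi as [HT|[Y [e [HY [E1 [E2 [E3 [E4 E5]]]]]]]].
  - left. apply (Permutation_in _ Hp) in HT. right; right.
    destruct HT as [E|[E|E]]; try discriminate; exact E.
  - right.
    pose proof (fun u => perm_cnt _ _ u Hp) as C. unfold cnt in C |- *. simpl in C |- *.
    unfold cnt in *.
    pose proof (C (Snd Tick)) as C1; pose proof (C (Rcv Tick)) as C2;
    pose proof (C Tick) as C3; pose proof (C (Snd Zero)) as C4;
    pose proof (C (Rcv Zero)) as C5; simpl in C1, C2, C3, C4, C5.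
    destruct e as [|e].
    +
      assert (IS : In (Snd Zero) Y) by (apply cnt_In; unfold cnt; lia).
      destruct (in_perm _ _ IS) as [RY HRY].
      assert (IR : In (Rcv Zero) RY).
      { assert (In (Rcv Zero) Y) by (apply cnt_In; unfold cnt; lia).
        apply (Permutation_in _ HRY) in H. destruct H as [E|E]; [discriminate|exact E]. }
      destruct (in_perm _ _ IR) as [RY' HRY'].
      assert (HP : Permutation Y (Snd Zero :: Rcv Zero :: RY'))
        by (eapply perm_trans; [exact HRY|constructor; exact HRY']).
      exists (Zero :: Zero :: RY'), 0. split.
      * eapply rt_trans; [exact HY|]. apply rt_step. exists Zero, Zero, RY'. auto.
      * pose proof (fun u => perm_cnt _ _ u HP) as D. unfold cnt in D.
        pose proof (D (Snd Tick)) as D1; pose proof (D (Rcv Tick)) as D2;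
        pose proof (D Tick) as D3; pose proof (D (Snd Zero)) as D4;
        pose proof (D (Rcv Zero)) as D5; simpl in D1, D2, D3, D4, D5.
        simpl. lia.
    + exists Y, e. split; auto. lia.
Qed.

Lemma Inv_steps Q X X' : flatish Q -> steps X X' -> Inv Q X -> Inv Q X'.
Proof.
  intros HQ. induction 1; auto. apply Inv_step; auto.
Qed.

Lemma flat_flatish Q : flat Q -> flatish Q.
Proof. unfold flat, flatish. intro H. eapply Forall_impl; [|exact H]. auto. Qed.

Theorem lemma5p15 (Q : process) :
  flat Q -> must_convergent Q -> must_convergent (Snd Zero :: Rcv Zero :: Q).
Proof.
  intros Hfl Hm X HX.
  pose proof (flat_flatish _ Hfl) as HQ.
  assert (I0 : Inv Q (Snd Zero :: Rcv Zero :: Q)).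
  { split.
    - constructor; [left; left; auto|constructor; [left; right; left; auto|exact HQ]].
    - right. exists Q, 1. split; [apply rt_refl|]. unfold cnt. simpl. lia. }
  destruct (Inv_steps _ _ _ HQ HX I0) as [Hf [HT|[Y [e [HY [E1 [E2 [E3 [E4 E5]]]]]]]]].
  - exists X. split; [apply rt_refl|exact HT].
  - apply good_may.
    assert (GY : good Y) by (apply may_good; [eapply steps_flatish; eauto|apply Hm; auto]).
    assert (TT : forall u, In u Y -> (u = Snd Tick \/ u = Rcv Tick \/ u = Tick \/ u = Snd Zero \/ u = Rcv Zero) -> In u X).
    { intros u Hu Hc. apply cnt_In in Hu. apply cnt_In.
      destruct Hc as [->|[->|[->|[->| ->]]]]; lia. }
    unfold good in *.
    destruct GY as [H0|[[H0 [H3|H3]]|[H0 [H3|H3]]]].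
    * left. apply TT; auto.
    * right; left. split; [apply TT; auto|left; apply TT; auto 6].
    * right; left. split; [apply TT; auto|right; apply TT; auto 6].
    * right; right. split; [apply TT; auto|left; apply TT; auto 6].
    * right; right. split; [apply TT; auto|right; apply TT; auto 6].
Qed.
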